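(* Suppose Assumption 1 holds, and let $\lambda^0$ be a probability measure on $(\mathsf{X},\mathcal{B}(\mathsf{X}))$ with $\lambda^0\ll\mu_{\mathrm{pr}}$. Define the probability measure $\widehat\lambda^0$ on $(\mathsf{X}^2,\mathcal{B}(\mathsf{X}^2))$ by $\widehat\lambda^0(A)=\lambda^0(A_\Delta)$, where $A_\Delta=\{z\in\mathsf{X}:(z,z)\in A\}$. Then for every $\ell=1,\dots,\mathsf{L}$, $\widehat\lambda^0\ll\nu_\ell$, where $\nu_\ell$ is the unique invariant probability measure of the joint kernel $\bm p_\ell$.
   Context: Setting: $\mathsf{X}$ separable Banach space, prior $\mu_{\mathrm{pr}}$; posteriors $\mu^y_j$ with $\mu_{\mathrm{pr}}$-densities $\pi^y_j$; proposal density $Q_\ell$ w.r.t. $\mu_{\mathrm{pr}}$; $\alpha_j(\theta,z)=\min\{1,\frac{\pi^y_j(z)Q_\ell(\theta)}{\pi^y_j(\theta)Q_\ell(z)}\}$. Joint kernel for $\bm\theta_\ell=(\theta_{\ell,\ell-1},\theta_{\ell,\ell})$: $\bm p_\ell(\bm\theta_\ell,A)=\int\min\{\alpha_{\ell-1}(\theta_{\ell,\ell-1},z),\alpha_\ell(\theta_{\ell,\ell},z)\}\mathbf 1_{\{(z,z)\in A\}}Q_\ell(z)\mu_{\mathrm{pr}}(\mathrm{d}z)+\int(\alpha_{\ell-1}(\theta_{\ell,\ell-1},z)-\alpha_\ell(\theta_{\ell,\ell},z))^+\mathbf 1_{\{(z,\theta_{\ell,\ell})\in A\}}Q_\ell(z)\mu_{\mathrm{pr}}(\mathrm{d}z)+\int(\alpha_\ell(\theta_{\ell,\ell},z)-\alpha_{\ell-1}(\theta_{\ell,\ell-1},z))^+\mathbf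 1_{\{(\theta_{\ell,\ell-1},z)\in A\}}Q_\ell(z)\mu_{\mathrm{pr}}(\mathrm{d}z)+\mathbf 1_{\{\bm\theta_\ell\in A\}}(1-\int\max\{\alpha_{\ell-1}(\theta_{\ell,\ell-1},z),\alpha_\ell(\theta_{\ell,\ell},z)\}Q_\ell(z)\mu_{\mathrm{pr}}(\mathrm{d}z))$. Under Assumption 1 this kernel has a unique invariant probability measure $\nu_\ell$. Assumption 1: (1.1) $Q_\ell$ continuous and positive; (1.2) each $\pi^y_j$ continuous and positive; (1.3) for $j=\ell-1,\ell$, all $c_r>0$, $\{\theta: Q_\ell(\theta)/\pi^y_j(\theta)\le c_r\}$ compact; (1.4) $\exists c\in(0,1)$ independent of $\ell$ with $\operatorname{ess\,inf}_z Q_\ell(z)/\pi^y_j(z)\ge c$; (1.5) $\exists r>1,C_r$ independent of $\ell$ with $\int Q_\ell^r\mathrm{d}\mu_{\mathrm{pr}}\le C_r$. *)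

(* Defs.v *)
From HB Require Import structures.
From mathcomp Require Import all_boot all_order all_algebra.
From mathcomp Require Import all_classical all_reals all_analysis ess_sup_inf.
Set Implicit Arguments. Unset Strict Implicit. Unset Printing Implicit Defensive.
Import Order.TTheory GRing.Theory Num.Theory.
Import numFieldNormedType.Exports.
Local Open Scope classical_set_scope.
Local Open Scope ring_scope.

Definition borel (X : topologicalType) := g_sigma_algebraType (@open X).

Definition separable (X : topologicalType) :=
  exists S : set X, countable S /\ dense S.

Section MHkernel.
Context {R : realType} {X : completeNormedModType R}.

Definition alphaMH (pi Q : X -> R) (t z : X) : R :=
  Num.min 1 ((pi z * Q t) / (pi t * Q z)).

(* The joint (coupled) kernel p_l(theta, A) on X^2, with
   pi1 = pi_{l-1}, pi2 = pi_l, Q = Q_l, mu = mu_pr; (x)^+ = max(x,0). *)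
Definition jointKernel (mu : set (borel X) -> \bar R) (pi1 pi2 Q : X -> R)
    (th : borel X * borel X) (A : set (borel X * borel X)) : \bar R :=
  let a1 := fun z => alphaMH pi1 Q th.1 z in
  let a2 := fun z => alphaMH pi2 Q th.2 z in
  ((\int[mu]_z ((Num.min (a1 z) (a2 z)) * \1_A (z, z) * Q z)%:E)
   + (\int[mu]_z ((Num.max (a1 z - a2 z) 0) * \1_A (z, th.2) * Q z)%:E)
   + (\int[mu]_z ((Num.max (a2 z - a1 z) 0) * \1_A (th.1, z) * Q z)%:E)
   + (\1_A th)%:E * (1 - \int[mu]_z ((Num.max (a1 z) (a2 z)) * Q z)%:E))%E.

End MHkernel.

(* Main.v *)
Require Import Defs.
From HB Require Import structures.
From mathcomp Require Import all_boot all_order all_algebra.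
From mathcomp Require Import all_classical all_reals all_analysis ess_sup_inf.
From mathcomp Require Import ring lra zify.
Import Order.TTheory GRing.Theory Num.Theory.
Import numFieldNormedType.Exports.
Local Open Scope classical_set_scope.
Local Open Scope ring_scope.

Import HBNNSimple.

Lemma le_integral_nm d (T : measurableType d) (R : realType)
  (mu : {measure set T -> \bar R}) (f g : T -> \bar R) :
  (forall x, (0 <= f x)%E) -> (forall x, (f x <= g x)%E) ->
  (\int[mu]_x f x <= \int[mu]_x g x)%E.
Proof.
move=> f0 fg; rewrite !ge0_integralTE //; last first.
  by move=> x; exact: le_trans (f0 x) (fg x).
apply: ge_ereal_sup => _ [h hf <-]; apply: le_ereal_sup_tmp.
exists (sintegral mu h) => //; exists h => // x; exact: le_trans (hf x) (fg x).
Qed.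

Lemma closed_borel (R : realType) (X : completeNormedModType R) (C : set (borel X)) :
  closed (C : set X) -> measurable C.
Proof.
move=> cC; have := @measurableC _ (borel X) (~` C).
rewrite setCK; apply; apply: sub_sigma_algebra; exact: closed_openC.
Qed.

Lemma closed_leF (R : realType) (X : completeNormedModType R) (f g : X -> R) :
  continuous f -> continuous g -> closed [set x | f x <= g x].
Proof.
move=> cf cg.
have -> : [set x | f x <= g x] = (g - f) @^-1` [set y | 0 <= y].
  by apply/seteqP; split => x /=; rewrite !fctE subr_ge0.
apply: preimage_closed; last exact: closed_ge.
by move=> x _; apply: cvgB; [exact: cg|exact: cf].
Qed.

Lemma alpha_lb (R : realType) (X : completeNormedModType R) (p q : X -> R)
  t z (M : R) : 1 <= M -> 0 < p t -> 0 < p z -> 0 < q t -> 0 < q z ->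
  p t <= M * q t -> q z <= M * p z -> M^-1 ^+ 2 <= alphaMH p q t z.
Proof.
move=> M1 pt pz qt qz h1 h2; rewrite /alphaMH le_min; apply/andP; split.
  rewrite expr_le1 ?invr_ge0 ?invf_le1 //; lra.
have M0 : 0 < M by lra.
rewrite ler_pdivlMr ?mulr_gt0 //.
have h : p t * q z <= (M * q t) * (M * p z).
  by apply: ler_pM => //; apply: ltW.
apply: le_trans (ler_wpM2l _ h) _; first by rewrite exprn_ge0 // invr_ge0 ltW.
have -> : M^-1 ^+ 2 * (M * q t * (M * p z)) = p z * q t.
  by field; lra.
by [].
Qed.

Lemma alpha_ge0 (R : realType) (X : completeNormedModType R) (p q : X -> R) t z :
  (forall x, 0 < p x) -> (forall x, 0 < q x) -> 0 <= alphaMH p q t z.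
Proof.
move=> pp qp; rewrite /alphaMH le_min ler01 /=.
by rewrite divr_ge0 // mulr_ge0 // ltW.
Qed.

Lemma alpha_le1 (R : realType) (X : completeNormedModType R) (p q : X -> R) t z :
  alphaMH p q t z <= 1.
Proof. by rewrite /alphaMH ge_min lexx. Qed.

Lemma exM {R : realType} (a b : R) : 0 < b -> exists n : nat, a <= n.+1%:R * b.
Proof.
move=> b0; exists (Num.bound `|a / b|); rewrite -ler_pdivrMr //.
apply: le_trans (ler_norm _) _; apply: ltW.
apply: lt_le_trans (archi_boundP (normr_ge0 _)) _; by rewrite ler_nat.
Qed.

Lemma sum4_ge {R : realType} (x a b c d : \bar R) :
  (0 <= b)%E -> (0 <= c)%E -> (0 <= d)%E -> (x <= a)%E -> (x <= a + b + c + d)%E.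
Proof.
move=> b0 c0 d0 xa; apply: (le_trans xa).
apply: le_trans (_ : a + 0 + 0 + 0 <= _)%E; first by rewrite !adde0.
by apply: leeD => //; apply: leeD => //; apply: leeD (lexx _) b0.
Qed.

Theorem mainTheorem7 (R : realType) (X : completeNormedModType R)
  (mu_pr : probability (borel X) R)
  (L : nat) (pi : nat -> X -> R) (Q : nat -> X -> R)
  (Xsep : separable X)
  (pi_dens : forall j, (j <= L)%N ->
     (forall x, 0 <= pi j x) /\ (\int[mu_pr]_z (pi j z)%:E = 1)%E)
  (Q_dens : forall l, (1 <= l <= L)%N ->
     (forall x, 0 <= Q l x) /\ (\int[mu_pr]_z (Q l z)%:E = 1)%E)
  (A11 : forall l, (1 <= l <= L)%N -> continuous (Q l) /\ forall x, 0 < Q l x)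
  (A12 : forall j, (j <= L)%N -> continuous (pi j) /\ forall x, 0 < pi j x)
  (A13 : forall l, (1 <= l <= L)%N -> forall j, (j = l.-1 \/ j = l) ->
     forall cr : R, 0 < cr -> compact [set t : X | Q l t / pi j t <= cr])
  (A14 : exists c : R, 0 < c < 1 /\
     forall l, (1 <= l <= L)%N -> forall j, (j = l.-1 \/ j = l) ->
       (c%:E <= ess_inf mu_pr (fun z : borel X => (Q l z / pi j z)%:E))%E)
  (A15 : exists (r Cr : R), 1 < r /\
     forall l, (1 <= l <= L)%N ->
       (\int[mu_pr]_z ((Q l z) `^ r)%:E <= Cr%:E)%E)
  (lam0 : probability (borel X) R)
  (lam0_ac : lam0 `<< mu_pr) :
  forall l, (1 <= l <= L)%N ->
  forall nu : probability (borel X * borel X)%type R,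
    (forall A : set (borel X * borel X), measurable A ->
       \int[nu]_th jointKernel mu_pr (pi l.-1) (pi l) (Q l) th A = nu A)%E ->
    pushforward lam0 (fun z : borel X => (z, z) : (borel X * borel X)%type)
      `<< nu.
Proof.
move=> l l1L nu inv; have /andP[l1 lL] := l1L.
have hl1 : (l.-1 <= L)%N by apply: leq_trans (leq_pred l) lL.
have [qc qpos] := A11 l l1L.
have [p1c p1pos] := A12 _ hl1.
have [p2c p2pos] := A12 _ lL.
have [q0 qint] := Q_dens l l1L.
set p1 := pi l.-1 in p1c p1pos inv *.
set p2 := pi l in p2c p2pos inv *.
set q := Q l in qc qpos q0 qint inv *.
pose dg := fun z : borel X => (z, z) : (borel X * borel X)%type.
have mdg : measurable_fun setT dg by apply: measurable_fun_pair; exact: measurable_id.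
apply/null_content_dominatesP => A mA nuA0.
have mAd : measurable (dg @^-1` A).
  by rewrite -[dg @^-1` A]setTI; exact: mdg.
rewrite /pushforward.
apply: ((null_content_dominatesP _ _).1 lam0_ac) => //.
apply/eqP; apply: contraT => muA.
pose M n : R := n.+1%:R.
have M1 n : 1 <= M n by rewrite /M ler1n.
have M0 n : 0 < M n by rewrite /M ltr0n.
have Mle n m : (n <= m)%N -> M n <= M m by move=> nm; rewrite /M ler_nat ltnS.
pose K1 n : set (borel X) := [set x | p1 x <= M n * q x].
pose K2 n : set (borel X) := [set x | p2 x <= M n * q x].
pose K n := K1 n `*` K2 n.
pose C n : set (borel X) := [set z | q z <= M n * p1 z] `&`
  [set z | q z <= M n * p2 z] `&` [set z | 1 <= M n * q z].
pose B n := dg @^-1` A `&` C n.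
have contM n (f : X -> R) : continuous f -> continuous (fun x => M n * f x).
  by move=> cf x; apply: cvgM; [exact: cvg_cst | exact: cf].
have mK n : measurable (K n).
  by apply: measurableX; apply: closed_borel; apply: closed_leF => //; exact: contM.
have mC n : measurable (C n).
  apply: measurableI; [apply: measurableI|]; apply: closed_borel;
    apply: closed_leF => //; try exact: contM.
  exact: cst_continuous.
have mB n : measurable (B n) by apply: measurableI.
have Kmono n m : (n <= m)%N -> K n `<=` K m.
  move=> nm [x y] [/= h1 h2]; split => /=.
    by apply: le_trans h1 _; rewrite ler_wpM2r ?Mle // ltW.
  by apply: le_trans h2 _; rewrite ler_wpM2r ?Mle // ltW.
have Bmono n m : (n <= m)%N -> B n `<=` B m.
  move=> nm z [Az [[h1 h2] h3]]; split => //; split; [split|].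
  - by apply: le_trans h1 _; rewrite ler_wpM2r ?Mle // ltW.
  - by apply: le_trans h2 _; rewrite ler_wpM2r ?Mle // ltW.
  - by apply: le_trans h3 _; rewrite ler_wpM2r ?Mle // ltW.
have UK : \bigcup_n K n = setT.
  apply/seteqP; split => // -[x y] _.
  have [n1 h1] := exM (p1 x) _ (qpos x).
  have [n2 h2] := exM (p2 y) _ (qpos y).
  exists (n1 + n2)%N => //.
  split => /=.
    by apply: le_trans h1 _; apply: ler_wpM2r; [exact: ltW | apply: Mle; lia].
  by apply: le_trans h2 _; apply: ler_wpM2r; [exact: ltW | apply: Mle; lia].
have UB : \bigcup_n B n = dg @^-1` A.
  apply/seteqP; split; first by move=> z [n _ []].
  move=> z Az.
  have [n1 h1] := exM (q z) _ (p1pos z).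
  have [n2 h2] := exM (q z) _ (p2pos z).
  have [n3 h3] := exM 1 _ (qpos z).
  exists (n1 + n2 + n3)%N => //; split => //; split; [split|].
  - by apply: le_trans h1 _; apply: ler_wpM2r; [exact: ltW | apply: Mle; lia].
  - by apply: le_trans h2 _; apply: ler_wpM2r; [exact: ltW | apply: Mle; lia].
  - by apply: le_trans h3 _; apply: ler_wpM2r; [exact: ltW | apply: Mle; lia].
have [n1 nK] : exists n, nu (K n) != 0.
  case: (pselect (exists n, nu (K n) != 0)) => // hn.
  have h0 n : nu (K n) = 0.
    have [//|h] := eqVneq (nu (K n)) 0; exfalso; apply: hn; by exists n.
  have : nu setT = 0.
    rewrite -UK; apply/(negligibleP nu (bigcupT_measurable _ mK)).1.
    apply: negligible_bigcup => n; apply/(negligibleP nu (mK n)).2; exact: h0.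
  by rewrite probability_setT => /eqP; rewrite eqe oner_eq0.
have [n2 nB] : exists n, mu_pr (B n) != 0.
  case: (pselect (exists n, mu_pr (B n) != 0)) => // hn.
  have h0 n : mu_pr (B n) = 0.
    have [//|h] := eqVneq (mu_pr (B n)) 0; exfalso; apply: hn; by exists n.
  have : mu_pr (dg @^-1` A) = 0.
    rewrite -UB; apply/(negligibleP mu_pr (bigcupT_measurable _ mB)).1.
    apply: negligible_bigcup => n; apply/(negligibleP mu_pr (mB n)).2; exact: h0.
  by move/eqP; rewrite (negbTE muA).
pose N := maxn n1 n2.
have nuK : (0 < nu (K N))%E.
  apply: lt_le_trans (_ : nu (K n1) <= _)%E; first by rewrite lt0e nK measure_ge0.
  by apply: le_measure; rewrite ?inE //; apply: Kmono; rewrite leq_maxl.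
have muB : (0 < mu_pr (B N))%E.
  apply: lt_le_trans (_ : mu_pr (B n2) <= _)%E; first by rewrite lt0e nB measure_ge0.
  by apply: le_measure; rewrite ?inE //; apply: Bmono; rewrite leq_maxr.
pose e := (M N)^-1.
have e0 : 0 < e by rewrite /e invr_gt0.
have finB : mu_pr (B N) \is a fin_num by apply: fin_num_measure.
pose c := e ^+ 3 * fine (mu_pr (B N)).
have c0 : 0 < c.
  rewrite /c mulr_gt0 ?exprn_gt0 // fine_gt0 // muB /=.
  exact: le_lt_trans (probability_le1 _ (mB N)) (ltry 1).
have key th : ((c * \1_(K N) th)%:E <=
    jointKernel mu_pr p1 p2 q th A)%E.
  rewrite /jointKernel /=; apply: sum4_ge.
  - apply: integral_ge0 => z _.
    by rewrite lee_fin !mulr_ge0 // ?indicE ?ler0n // ?le_max ?lexx ?orbT.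
  - apply: integral_ge0 => z _.
    by rewrite lee_fin !mulr_ge0 // ?indicE ?ler0n // ?le_max ?lexx ?orbT.
  - apply: mule_ge0; first by rewrite lee_fin indicE ler0n.
    rewrite sube_ge0 ?orbT // -qint; apply: le_integral_nm => z.
      by rewrite lee_fin mulr_ge0 // le_max alpha_ge0.
    by rewrite lee_fin ler_piMl // ge_max !alpha_le1.
  have [hK|hK] := boolP (th \in K N); last first.
    rewrite ?indicE (negbTE hK) mulr0; apply: integral_ge0 => z _.
    by rewrite lee_fin !mulr_ge0 // ?indicE ?ler0n // le_min !alpha_ge0.
  rewrite ?indicE hK mulr1.
  have -> : c%:E = (\int[mu_pr]_z (e ^+ 3 * \1_(B N) z)%:E)%E.
    rewrite (integralZl_indic _ (fun _ => B N)) //; last first.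
      move=> /lt_le_trans; move/(_ _ (exprn_ge0 3 (ltW e0))); by rewrite ltxx.
    by rewrite integral_indic // setIT /c EFinM fineK.
  apply: le_integral_nm => z.
    rewrite lee_fin; apply: mulr_ge0; first exact: exprn_ge0 (ltW e0).
    by rewrite ?indicE ler0n.
  move: hK; rewrite in_setE => -[/= hk1 hk2].
  rewrite lee_fin indicE; have [hz|hz] := boolP (z \in B N); last first.
    by rewrite mulr0 !mulr_ge0 // ?indicE ?ler0n // le_min !alpha_ge0.
  rewrite mulr1; move: hz; rewrite in_setE => -[/= Az [[h1 h2] h3]].
  rewrite ?indicE mem_set // mulr1.
  have la1 := @alpha_lb _ _ p1 q th.1 z (M N) (M1 N) (p1pos th.1) (p1pos z) (qpos th.1) (qpos z) hk1 h1.
  have la2 := @alpha_lb _ _ p2 q th.2 z (M N) (M1 N) (p2pos th.2) (p2pos z) (qpos th.2) (qpos z) hk2 h2.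
  have qe : e <= q z.
    have := ler_wpM2l (ltW e0) h3.
    by rewrite mulr1 mulrA /e mulVf ?mul1r // gt_eqF.
  rewrite exprSr; apply: ler_pM => //; first exact: exprn_ge0 (ltW e0).
    exact: ltW.
  by rewrite le_min la1 la2.
have : (\int[nu]_th (c * \1_(K N) th)%:E <= nu A)%E.
  rewrite -(inv A mA); apply: le_integral_nm => // th.
  by rewrite lee_fin; apply: mulr_ge0; [exact: ltW | rewrite ?indicE ler0n].
rewrite (integralZl_indic _ (fun _ => K N)) //; last first.
  by move=> /(lt_trans c0); rewrite ltxx.
rewrite integral_indic // setIT nuA0 => h.
have hc : (0 < c%:E)%E by rewrite lte_fin.
by have := mule_gt0 hc nuK; rewrite ltNge h.
Qed.
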